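(* For every $n\ge1$, the $\mathbb{Q}$-space $I(G,* )\cap P^G_n$ is spanned by the elements $m-\alpha(m)$, where $m$ ranges over strongly multilinear monomials of degree $n$ and $\alpha$ over path transformations of $m$.
   Context: Let $G=\{g_1=e,\dots,g_k\}$ be a finite group of order $k$. Index rows/columns of $k\times k$ matrices by $G$, let $E_{a,b}$ be matrix units, $P_g=\sum_{h\in G}E_{h,hg}$, and give $M_k(\mathbb{C})$ the $G$-crossed-product grading $M_k(\mathbb{C})_g=\{DP_g: D\text{ diagonal}\}$, with involution $*$ = transpose. $F=\mathbb{Q}\{x_{i,g},x^*_{i,g}: i\ge1,g\in G\}$ is the free algebra with involution $*$ exchanging $x_{i,g}\leftrightarrow x^*_{i,g}$. $I(G,* )$ is the set of $f\in F$ vanishing under every substitution $x_{i,g}\mapsto A_{i,g}\in M_k(\mathbb{C})_g$, $x^*_{i,g}\mapsto A_{i,g}^T$. $W_n=S_n\times\{\pm1\}^n$ acts on monomials: for $\alpha=(\pi,\gamma)$ and $m=x_{i_1,\sigma_{i_1}}^{\epsilon_{i_1}}\cdots x_{i_n,\sigma_{i_n}}^{\epsilon_{i_n}}$ ($\{i_1,\dots,i_n\}=\{1,\dots,n\}$), $\alpha(m)=x_{\pi(i_1),\sigma_{\pi(i_1)}}^{\delta_{\pi(i_1)}}\cdots x_{\pi(i_n),\sigma_{\pi(i_n)}}^{\delta_{\pi(i_n)}}$ with $\delta_j=\epsilon_j$ if $\gamma_j=1$ and the opposite choice if $\gamma_j=-1$. A strongly multilinear monomial of degree $n$ is $m=x_{j_1,h_1}^{\epsilon_1}\cdots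 x_{j_n,h_n}^{\epsilon_n}$ with $(j_1,\dots,j_n)$ a permutation of $(1,\dots,n)$, $h_r\in G$, $\epsilon_r\in\{\text{nothing},*\}$; $P^G_n$ is the $\mathbb{Q}$-span of all of them. Put $\tau_r=h_r$ if $\epsilon_r$ is nothing, $\tau_r=h_r^{-1}$ if $\epsilon_r=*$; $w(m)=\tau_1\cdots\tau_n$; for $i=j_r$, $s_m(i)=\tau_1\cdots\tau_{r-1}$ if $\epsilon_r$ is nothing and $s_m(i)=\tau_1\cdots\tau_{r-1}h_r^{-1}$ if $\epsilon_r=*$. $\alpha\in W_n$ is a path transformation of $m$ if $w(\alpha(m))=w(m)$ and $s_{\alpha(m)}(i)=s_m(i)$ for all $i$. *)

(* Defs.v *)
From HB Require Import structures.
From mathcomp Require Import all_boot all_order all_algebra all_fingroup.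
Set Implicit Arguments. Unset Strict Implicit. Unset Printing Implicit Defensive.
Import Order.TTheory GRing.Theory Num.Theory.
Local Open Scope ring_scope.

(* A strongly multilinear monomial of degree n in the variables
   x_{i,g}, x^*_{i,g} (i in 'I_n, i.e. variables 1..n shifted to 0..n-1).
   Since each variable i occurs exactly once, m is determined by
   - mpos m : {perm 'I_n}, position r  |->  variable j_r occupying it,
   - mlab m : variable i |-> its group label h (= sigma_i),
   - mstar m : variable i |-> true iff it occurs starred (eps_i = * ). *)
Definition mono (n : nat) (gT : finGroupType) :=
  ({perm 'I_n} * {ffun 'I_n -> gT} * {ffun 'I_n -> bool})%type.

Section Mono.
Variables (n : nat) (gT : finGroupType).

Definition mpos (m : mono n gT) : {perm 'I_n} := m.1.1.
Definition mlab (m : mono n gT) : {ffun 'I_n -> gT} := m.1.2.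
Definition mstar (m : mono n gT) : {ffun 'I_n -> bool} := m.2.

(* Action of alpha = (pi, gamma) in W_n = S_n x {+-1}^n; gamma i = true
   encodes gamma_i = -1.  alpha(m) has variable pi(j_r) at position r,
   with the label sigma_{pi(j_r)} and the star flipped iff gamma = -1. *)
Definition Wact (pi : {perm 'I_n}) (gamma : {ffun 'I_n -> bool})
    (m : mono n gT) : mono n gT :=
  ((mpos m * pi)%g, mlab m, [ffun i => mstar m i (+) gamma i]).

Definition tau (m : mono n gT) (r : 'I_n) : gT :=
  let j := mpos m r in if mstar m j then ((mlab m j)^-1)%g else mlab m j.

Definition wm (m : mono n gT) : gT := (\prod_(r < n) tau m r)%g.

Definition sm (m : mono n gT) (i : 'I_n) : gT :=
  let r := ((mpos m)^-1)%g i in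
  ((\prod_(r0 < n | (r0 < r)%N) tau m r0) *
   (if mstar m i then ((mlab m i)^-1)%g else 1))%g.

Definition path_trans (pi : {perm 'I_n}) (gamma : {ffun 'I_n -> bool})
    (m : mono n gT) : bool :=
  (wm (Wact pi gamma m) == wm m) &&
  [forall i, sm (Wact pi gamma m) i == sm m i].

(* Elements of P^G_n: Q-linear combinations of the monomials,
   represented by their coefficient functions. *)
Definition Pn := {ffun mono n gT -> rat}.

Definition basis_el (m : mono n gT) : Pn := [ffun m' => (m' == m)%:R].

Definition Pmx (C : fieldType) (g : gT) : 'M[C]_#|gT| :=
  \matrix_(a, b) ((enum_val b == (enum_val a * g)%g)%:R).

Definition graded (C : fieldType) (g : gT) (M : 'M[C]_#|gT|) : Prop :=
  exists d : 'rV[C]_#|gT|, M = diag_mx d *m Pmx C g.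

Definition eval_mono (C : fieldType) (A : 'I_n -> gT -> 'M[C]_#|gT|)
    (m : mono n gT) : 'M[C]_#|gT| :=
  \big[mulmx/1%:M]_(r < n)
     (let j := mpos m r in
      if mstar m j then (A j (mlab m j))^T else A j (mlab m j)).

Definition eval_Pn (C : numClosedFieldType) (A : 'I_n -> gT -> 'M[C]_#|gT|)
    (f : Pn) : 'M[C]_#|gT| :=
  \sum_(m : mono n gT) ratr (f m) *: eval_mono A m.

Definition in_IG (C : numClosedFieldType) (f : Pn) : Prop :=
  forall A : 'I_n -> gT -> 'M[C]_#|gT|,
    (forall i g, graded g (A i g)) -> eval_Pn A f = 0.

Definition in_path_span (f : Pn) : Prop :=
  exists c : mono n gT * {perm 'I_n} * {ffun 'I_n -> bool} -> rat,
    forall m' : mono n gT,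
      f m' = \sum_(p | path_trans p.1.2 p.2 p.1.1)
               c p * (basis_el p.1.1 m' - basis_el (Wact p.1.2 p.2 p.1.1) m').

End Mono.

(* Main.v *)
Require Import Defs.
From HB Require Import structures.
From mathcomp Require Import all_boot all_order all_algebra all_fingroup.
Set Implicit Arguments. Unset Strict Implicit. Unset Printing Implicit Defensive.
Import Order.TTheory GRing.Theory Num.Theory.

Section Proof.
Variables (gT : finGroupType) (C : numClosedFieldType).
Local Open Scope ring_scope.

HB.instance Definition _ := Monoid.isLaw.Build 'M[C]_#|gT| 1%:M (@mulmx C #|gT| #|gT| #|gT|) (@mulmxA C _ _ _ _) (@mul1mx C _ _) (@mulmx1 C _ _).

Lemma prod_entry (k : nat) (F : nat -> 'M[C]_#|gT|) (t : nat -> gT)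
  (c : nat -> 'I_#|gT| -> C) :
 (forall r a b, F r a b = c r a * (enum_val b == enum_val a * t r)%g%:R) ->
 forall a b, (\big[mulmx/1%:M]_(0 <= r < k) F r) a b =
   (enum_val b == enum_val a * (\prod_(0 <= r < k) t r))%g%:R *
   \prod_(0 <= r < k) c r (enum_rank (enum_val a * (\prod_(0 <= r0 < r) t r0))%g).
Proof.
move=> HF; elim: k => [|k IH] a b.
  rewrite !big_geq // /scalar_mx mxE mulg1 mulr1 (inj_eq enum_val_inj) eq_sym; by case: (b == a).
rewrite !big_nat_recr //= mxE.
rewrite (bigD1 (enum_rank (enum_val a * \prod_(0 <= r < k) t r)%g)) //= [X in _ + X]big1.
  rewrite IH HF !enum_rankK eqxx mul1r addr0 mulgA.
  by rewrite mulrA mulrC.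
move=> x Hx; rewrite IH.
case: eqP => [Ex|]; last by rewrite !mul0r.
by case/eqP: Hx; rewrite -Ex enum_valK.
Qed.


Lemma graded_entry g (M : 'M[C]_#|gT|) : graded g M ->
  forall a b, M a b = M a (enum_rank (enum_val a * g)%g) *
                      (enum_val b == enum_val a * g)%g%:R.
Proof.
case=> d -> a b; rewrite !mul_diag_mx !mxE /Pmx ?mxE enum_rankK eqxx mulr1.
reflexivity.
Qed.

Definition Dg (M : 'M[C]_#|gT|) (g : gT) (x : 'I_#|gT|) :=
  M x (enum_rank (enum_val x * g)%g).

Variable n : nat.

Lemma prefixE (m : mono n.+1 gT) (r : 'I_n.+1) :
  (\prod_(r0 < n.+1 | (r0 < r)%N) tau m r0)%g =
  (\prod_(0 <= r0 < r) tau m (inord r0))%g.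
Proof.
rewrite (big_nat_widen 0 r n.+1); last exact: ltnW (ltn_ord r).
rewrite big_mkord; apply: eq_big => [i|i _]; first by [].
by rewrite inord_val.
Qed.

Lemma eval_formula (A : 'I_n.+1 -> gT -> 'M[C]_#|gT|)
  (HA : forall i g, graded g (A i g)) (m : mono n.+1 gT) a b :
  eval_mono A m a b = (enum_val b == enum_val a * wm m)%g%:R *
   \prod_(j < n.+1) Dg (A j (mlab m j)) (mlab m j)
        (enum_rank (enum_val a * sm m j)%g).
Proof.
rewrite /eval_mono.
have -> : \big[mulmx/1%:M]_(r < n.+1)
    (let j := mpos m r in
     if mstar m j then (A j (mlab m j))^T else A j (mlab m j)) =
  \big[mulmx/1%:M]_(0 <= r < n.+1)
    (let j := mpos m (inord r) in
     if mstar m j then (A j (mlab m j))^T else A j (mlab m j)).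
  by rewrite big_mkord; apply: eq_bigr => r _; rewrite inord_val.
rewrite (@prod_entry n.+1 _ (fun r => tau m (inord r))
   (fun r x => let j := mpos m (inord r) in
     if mstar m j then Dg (A j (mlab m j)) (mlab m j)
                          (enum_rank (enum_val x * (mlab m j)^-1)%g)
     else Dg (A j (mlab m j)) (mlab m j) x)); last first.
  move=> r x y /=; rewrite /tau.
  case: (mstar m (mpos m (inord r))) => /=; last first.
    by rewrite (graded_entry (HA _ _)).
  set j := mpos m (inord r); set h := mlab m j.
  rewrite mxE (graded_entry (HA _ _)) /Dg.
  have -> : (enum_val x == enum_val y * h)%g = (enum_val y == enum_val x * h^-1)%g.
    by apply/eqP/eqP => ->; rewrite ?mulgK ?mulgKV.
  case: eqP => E; last by rewrite !mulr0.
  have -> : y = enum_rank (enum_val x * h^-1)%g by rewrite -E enum_valK.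
  by [].
have -> : (\prod_(0 <= r < n.+1) tau m (inord r))%g = wm m.
  by rewrite /wm big_mkord; apply: eq_bigr => r _; rewrite inord_val.
congr (_ * _).
rewrite big_mkord [RHS](reindex_inj (@perm_inj _ (mpos m))) /=.
apply: eq_bigr => r _; rewrite inord_val /sm permK prefixE.
case: (mstar m (mpos m r)); last by rewrite mulg1.
by rewrite enum_rankK mulgA.
Qed.


Definition key (m : mono n.+1 gT) :=
  (wm m, mlab m, [ffun i => sm m i]).

Lemma eval_key (A : 'I_n.+1 -> gT -> 'M[C]_#|gT|)
  (HA : forall i g, graded g (A i g)) (m m' : mono n.+1 gT) :
  key m = key m' -> eval_mono A m = eval_mono A m'.
Proof.
case=> Ew El Es; apply/matrixP => a b; rewrite !eval_formula //.
rewrite Ew El; congr (_ * _); apply: eq_bigr => j _.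
by move/ffunP/(_ j): Es; rewrite !ffunE => ->.
Qed.

Lemma Wact_key pi gamma (m : mono n.+1 gT) :
  path_trans pi gamma m -> key (Wact pi gamma m) = key m.
Proof.
case/andP => /eqP Hw /forallP Hs; rewrite /key Hw.
congr (_, _); apply/ffunP => i; rewrite !ffunE; exact/eqP/Hs.
Qed.

Lemma sum_basis (y : C) (q : mono n.+1 gT) (E : mono n.+1 gT -> 'M[C]_#|gT|) :
  \sum_m' (y * (m' == q)%:R) *: E m' = y *: E q.
Proof.
rewrite (bigD1 q) //= big1 ?addr0; first by rewrite eqxx mulr1n mulr1.
by move=> m' /negPf H; rewrite H mulr0n mulr0 scale0r.
Qed.

Lemma sum_basis2 (x : rat) (q q' : mono n.+1 gT)
  (E : mono n.+1 gT -> 'M[C]_#|gT|) :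
  \sum_m' ratr (x * ((m' == q)%:R - (m' == q')%:R)) *: E m' =
  ratr x *: (E q - E q').
Proof.
under eq_bigr => m' _ do rewrite rmorphM rmorphB !rmorph_nat mulrBr scalerBl.
by rewrite sumrB (sum_basis (ratr x) q E) (sum_basis (ratr x) q' E) scalerBr.
Qed.

Lemma span_IG (f : Pn n.+1 gT) : in_path_span f -> in_IG C f.
Proof.
case=> c Hf A HA; rewrite /eval_Pn.
under eq_bigr => m' _ do rewrite Hf rmorph_sum scaler_suml.
rewrite exchange_big /=; apply: big1 => p Hp.
under eq_bigr => m' _ do rewrite /basis_el !ffunE.
rewrite (sum_basis2 (c p) p.1.1 (Wact p.1.2 p.2 p.1.1) (eval_mono A)).
by rewrite (eval_key HA (Wact_key Hp)) subrr scaler0.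
Qed.

Lemma prod_bool (I : finType) (b : I -> bool) :
  \prod_(j : I) ((b j)%:R : C) = ([forall j, b j])%:R.
Proof.
case: (boolP [forall j, b j]) => [/forallP Hall | /forallPn [j Hj]].
  by rewrite big1 // => j _; rewrite Hall.
by rewrite (bigD1 j) //= (negPf Hj) mul0r.
Qed.

Lemma classsum (f : Pn n.+1 gT) k : in_IG C f ->
  \sum_(m | key m == k) f m = 0.
Proof.
move=> H; case: k => [[w s0] s].
pose A := fun (i : 'I_n.+1) (g : gT) =>
  diag_mx (\row_x ((g == s0 i) && (enum_val x == s i))%:R) *m Pmx C g.
have HA : forall i g, graded g (A i g) by move=> i g; eexists.
have := H A HA; move/matrixP/(_ (enum_rank 1%g) (enum_rank w)).
rewrite /eval_Pn summxE mxE.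
have Hm : forall m, eval_mono A m (enum_rank 1%g) (enum_rank w) =
                    (key m == (w, s0, s))%:R.
  move=> m; rewrite eval_formula // !enum_rankK !mul1g.
  under eq_bigr => j _ do
    rewrite /Dg /A mul_diag_mx !mxE /Pmx ?mxE !enum_rankK eqxx mulr1 mul1g.
  have -> : (key m == (w, s0, s)) = (w == wm m) &&
       [forall j, (mlab m j == s0 j) && (sm m j == s j)].
    rewrite /key !xpair_eqE [wm m == w]eq_sym -andbA; congr (_ && _).
    apply/andP/forallP => [[/eqP Hl /eqP Hs] j | Hall].
      by rewrite -Hl -Hs ffunE !eqxx.
    split; apply/eqP/ffunP => j; have /andP[/eqP h1 /eqP h2] := Hall j.
      by [].
    by rewrite ffunE.
  rewrite (prod_bool (fun j => (mlab m j == s0 j) && (sm m j == s j))).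
  by rewrite -natrM mulnb.
under eq_bigr => m _ do rewrite mxE Hm.
move=> H0; apply/eqP; rewrite -(fmorph_eq0 (@ratr C)) rmorph_sum big_mkcond /=.
apply/eqP; rewrite -[RHS]H0; apply: eq_bigr => m _.
by case: (key m == _); rewrite /= ?mulr1n ?mulr0n ?mulr1 ?mulr0 ?rmorph0.
Qed.


Definition rep (m : mono n.+1 gT) : mono n.+1 gT :=
  odflt m [pick x | key x == key m].

Lemma rep_key m : key (rep m) = key m.
Proof. by rewrite /rep; case: pickP => [x /eqP|]. Qed.

Lemma rep_eq m1 m2 : key m1 = key m2 -> rep m1 = rep m2.
Proof.
rewrite /rep => ->; case: pickP => [x _|H] //.
by have := H m2; rewrite eqxx.
Qed.

Definition pi_of (m : mono n.+1 gT) : {perm 'I_n.+1} :=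
  ((mpos m)^-1 * mpos (rep m))%g.
Definition ga_of (m : mono n.+1 gT) : {ffun 'I_n.+1 -> bool} :=
  [ffun i => mstar m i (+) mstar (rep m) i].

Lemma Wact_rep m : Wact (pi_of m) (ga_of m) m = rep m.
Proof.
move: (rep_key m); rewrite /Wact /pi_of /ga_of.
case: (rep m) => [[p l] s]; rewrite /key /mpos /mlab /mstar /= => [[_ El _]].
rewrite mulVKg El; congr (_, _); apply/ffunP => i; by rewrite !ffunE addKb.
Qed.

Lemma pt_rep m : path_trans (pi_of m) (ga_of m) m.
Proof.
rewrite /path_trans Wact_rep; have := rep_key m; rewrite /key.
case=> -> _ Hs; rewrite eqxx /=; apply/forallP => i.
by move/ffunP/(_ i): Hs; rewrite !ffunE => ->.
Qed.

Lemma IG_span (f : Pn n.+1 gT) : in_IG C f -> in_path_span f.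
Proof.
move=> HI.
exists (fun p => if (p.1.2 == pi_of p.1.1) && (p.2 == ga_of p.1.1)
                 then f p.1.1 else 0) => m'.
rewrite (partition_big (fun p => p.1.1) xpredT) //=.
rewrite (eq_bigr (fun m => f m * ((m' == m)%:R - (m' == rep m)%:R))); last first.
  move=> m _; rewrite (bigD1 (m, pi_of m, ga_of m)) /=; last first.
    by rewrite pt_rep eqxx.
  rewrite !eqxx /= Wact_rep big1 ?addr0; first by rewrite /basis_el !ffunE.
  move=> [[m1 p1] g1] /= /andP [/andP [_ /eqP E1] Hne]; subst m1.
  case: ifP => [/andP [/eqP E2 /eqP E3]|_]; last by rewrite mul0r.
  by move: Hne; rewrite E2 E3 eqxx.
rewrite (eq_bigr (fun m => f m * (m' == m)%:R - f m * (m' == rep m)%:R));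
  last by move=> m _; rewrite mulrBr.
rewrite sumrB (bigD1 m') //= big1 ?addr0; last first.
  by move=> m /negPf; rewrite eq_sym => ->; rewrite mulr0.
rewrite eqxx mulr1n mulr1.
have Heq m : (m' == rep m) = (key m == key m') && (rep m' == m').
  apply/eqP/andP => [->|[/eqP Hk /eqP <-]].
    by rewrite rep_key (rep_eq (rep_key m)) !eqxx.
  by rewrite (rep_eq Hk).
rewrite (eq_bigr (fun m => (if key m == key m' then f m else 0) *
                           (rep m' == m')%:R)); last first.
  move=> m _; rewrite Heq; case: (key m == key m'); case: (rep m' == m');
  by rewrite /= ?mulr1n ?mulr0n ?mulr0 ?mulr1 ?mul0r.
by rewrite -mulr_suml -big_mkcond /= classsum // mul0r subr0.
Qed.

End Proof.

Theorem mainTheorem4 (gT : finGroupType) (C : numClosedFieldType) (n : nat)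
  (hn : (0 < n)%N) (f : Pn n gT) :
  in_IG C f <-> in_path_span f.
Proof.
move: f; case: n hn => // n _ f.
split; [exact: IG_span | exact: span_IG].
Qed.
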